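(* Let $G=(V,E,\{w_j\})$ be a reduced instance of the line highway problem with $[s,\ell]$-valuation (with $s\ge 1$), and let $r=s/\ell$. Let $\boldsymbol{\sigma}$ be the (random) price vector output by the algorithm Line_Random described in the context. Then \[ \frac{\mathrm{Opt}_{\rm coup}(G)}{\mathbf{E}[\mathrm{Profit}_{\rm coup}(\boldsymbol{\sigma})]}\le \begin{cases} 3/r & 0<r\le 1/2,\\ 6 & 1/2<r\le 1,\end{cases} \] where the expectation is over the random choices of the algorithm.
   Context: For integers $a\le b$, $[a,b]=\{a,a+1,\dots,b\}$. A reduced instance of the line highway problem is $G=(V,E,\{w_j\})$ with $V=[1,n]$ (items) and a finite multiset $E=\{e_1,\dots,e_m\}$ of customers, each $e_j=[j_s,j_t]$ with $1\le j_s\le j_t\le n$, having valuation (weight) $w_j>0$; valuations are integers. It has $[s,\ell]$-valuation if $s=\min_j w_j$ and $\ell=\max_j w_j$. For a price vector $\mathbf p=(p_1,\dots,p_n)\in\mathbb R^n$ (prices may be negative), let $p(e_j)=\sum_{i\in e_j}p_i$. The coupon-model profit is $\mathrm{Profit}_{\rm coup}(\mathbf p)=\sum_{j:\,w_j\ge p(e_j)}\max\{p(e_j),0\}$, and $\mathrm{Opt}_{\rm coup}(G)=\max_{\mathbf p}\mathrm{Profit}_{\rm coup}(\mathbf p)$. The DAG representation of $G$ has vertices $u_0,u_1,\dots,u_n$ and, for each $e_j=[j_s,j_t]$, an arc $u_{j_s-1}\to u_{j_t}$ of weight $w_j$; a partial-sum vector $(s_0,\dots,s_n)$ on these vertices determines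 the price vector $p_i=s_i-s_{i-1}$, $i\in[1,n]$. Algorithm Line_Random: construct the DAG representation; for each $u_i$ independently choose a partial sum $s_i$ uniformly at random from the integers $\{0,1,\dots,\ell\}$; output $\sigma_i=s_i-s_{i-1}$ for $i\in[1,n]$. *)

(* Defs.v *)
From mathcomp Require Import all_boot all_order all_algebra.
Set Implicit Arguments. Unset Strict Implicit. Unset Printing Implicit Defensive.
Import Order.TTheory GRing.Theory Num.Theory.
Local Open Scope ring_scope.

(* A customer e_j = [cs, ct] (items are 1..n) with integer valuation cw. *)
Record customer := Customer { cs : nat; ct : nat; cw : nat }.

Definition valid_instance (n : nat) (E : seq customer) : bool :=
  all (fun c => (1 <= cs c)%N && (cs c <= ct c)%N && (ct c <= n)%N) E.

Section Profit.
Variable R : realFieldType.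

(* Price vectors: p : 'I_n -> R, where item i (1-based) has price p (i-1). *)
Definition price_of (n : nat) (p : 'I_n -> R) (c : customer) : R :=
  \sum_(i < n | (cs c <= i.+1 <= ct c)%N) p i.

Definition profit_coup (n : nat) (E : seq customer) (p : 'I_n -> R) : R :=
  \sum_(c <- E | price_of p c <= (cw c)%:R) Num.max (price_of p c) 0.

(* Line_Random: partial sums s_0..s_n in {0..l}; sigma_i = s_i - s_{i-1}. *)
Definition line_random_price (n l : nat) (s : {ffun 'I_n.+1 -> 'I_l.+1})
  : 'I_n -> R :=
  fun i => ((s (inord i.+1) : nat)%:R - (s (inord i) : nat)%:R).

Definition expected_profit_line_random (n l : nat) (E : seq customer) : R :=
  (\sum_(s : {ffun 'I_n.+1 -> 'I_l.+1})
      profit_coup E (line_random_price s)) / ((l.+1 ^ n.+1)%N)%:R.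

End Profit.

(* Main.v *)
Require Import Defs.
From mathcomp Require Import all_boot all_order all_algebra zify ring lra.
Import Order.TTheory GRing.Theory Num.Theory.

Definition hw (w x y : nat) : nat := if (x < y) && (y <= x + w) then y - x else 0.
Definition Gs (L w : nat) : nat := \sum_(x < L) \sum_(y < L) hw w x y.
Definition Ps (L w : nat) : nat := \sum_(y < L) (if y <= w then (y:nat) else 0).

Lemma Ps_eq L w : 2 * Ps L.+1 w = minn L w * (minn L w).+1.
Proof.
elim: L => [|L IH]; first by rewrite /Ps big_ord1 /=; lia.
rewrite /Ps big_ord_recr /= mulnDr -/(Ps L.+1 w) IH.
case: (leqP L.+1 w) => h; lia.
Qed.

Lemma hwS w x y : hw w x.+1 y.+1 = hw w x y.
Proof. by rewrite /hw ltnS addSn ltnS subSS. Qed.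

Lemma Gs_step L w : Gs L.+1 w = Ps L.+1 w + Gs L w.
Proof.
rewrite /Gs big_ord_recl; congr (_ + _).
  apply: eq_bigr => y _; rewrite /hw /= subn0 add0n.
  move: (nat_of_ord y) => k; case: k => [|k] //=; by case: ifP.
apply: eq_bigr => x _; rewrite big_ord_recl /= /hw /= add0n.
by apply: eq_bigr => y _; rewrite /bump /= -/(hw _ _ _) hwS.
Qed.

Lemma Gs_eq L w : 6 * Gs L.+1 w =
  if L <= w then L * L.+1 * L.+2 else w * w.+1 * (3 * L + 2 - 2 * w).
Proof.
elim: L => [|L IH].
  by rewrite /Gs !big_ord1 /hw.
rewrite Gs_step mulnDr.
have := Ps_eq L.+1 w.
move: IH; case: (leqP L w) => h1; case: (leqP L.+1 w) => h2 IH HP.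
- nia.
- have E : w = L by lia. subst w.
  rewrite (_ : 3 * L.+1 + 2 - 2 * L = L + 5); last lia. nia.
- lia.
-
  rewrite (_ : 3 * L.+1 + 2 - 2 * w = (3 * L + 2 - 2 * w) + 3) ; last lia. nia.
Qed.
Lemma boundA' s w l t : (s <= w)%N -> (w <= l)%N -> (2*s <= l)%N -> 2*w + t = 3 * l + 2 ->
  (2*s*(l.+1)^2 <= l * (w.+1 * t))%N.
Proof.
move=> h1 h2 h3 ht.
case: (leqP l (2*w)) => h4.
  have H1 : ((l.+1) * (l.+2) <= w.+1 * t)%N.
    have [k [m [Hw [Hl Ht]]]] : exists k m, w = (k+m)%N /\ l = (2*k+m)%N /\ t = (4*k+m+2)%N.
      by exists (l-w)%N, (2*w-l)%N; lia.
    subst; nia.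
  have H2 : (2*s*(l.+1) <= l * l.+2)%N by nia.
  nia.
have H1 : ((s.+1) * (2 * l + 2) <= w.+1 * t)%N.
  have H5 : (2 * l + 2 <= t)%N by lia.
  have H6 : (s.+1 <= w.+1)%N by lia.
  exact: leq_mul.
have H2 : (s * l.+1 <= l * s.+1)%N by nia.
nia.
Qed.

Lemma Gs_form w l : (w <= l)%N -> (6 * Gs l.+1 w = w * w.+1 * (3 * l + 2 - 2 * w))%N.
Proof.
move=> h; rewrite Gs_eq; case: leqP => h' //.
have E : w = l by lia. subst w.
by rewrite (_ : (3 * l + 2 - 2 * l = l.+2)%N); last lia.
Qed.

Lemma boundA s w l : (s <= w)%N -> (w <= l)%N -> (2*s <= l)%N ->
  (2*s*w*(l.+1)^2 <= l * (6 * Gs l.+1 w))%N.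
Proof.
move=> h1 h2 h3; rewrite Gs_form //.
have := @boundA' s w l (3 * l + 2 - 2 * w) h1 h2 h3 ltac:(lia).
move=> H.
have := leq_mul (leqnn w) H. nia.
Qed.

Lemma boundB s w l : (s <= w)%N -> (w <= l)%N -> (l < 2*s)%N ->
  (w*(l.+1)^2 <= 6 * Gs l.+1 w)%N.
Proof.
move=> h1 h2 h3; rewrite Gs_form //.
set t := (3 * l + 2 - 2 * w)%N.
have H1 : ((l.+1) * (l.+2) <= w.+1 * t)%N.
  have [k [m [Hw [Hl Ht]]]] : exists k m, w = (k+m)%N /\ l = (2*k+m)%N /\ t = (4*k+m+2)%N.
    by exists (l-w)%N, (2*w-l)%N; rewrite /t; lia.
  rewrite Ht; subst; nia.
have := leq_mul (leqnn w) H1. nia.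
Qed.

Local Open Scope ring_scope.
Section Marg.
Variable R : realFieldType.
Variables (T J : finType) (a b : T).
Hypothesis ab : a != b.

Definition Fam (x y : J) := fun i : T => if i == a then pred1 x else if i == b then pred1 y else predT.

Lemma card_fam x y : #|[pred S : {ffun T -> J} | (S a == x) && (S b == y)]| =
   \prod_(i : T) (if (i == a) || (i == b) then 1 else #|J|)%N.
Proof.
rewrite (@eq_card _ _ (family (Fam x y))); last first.
  move=> S; rewrite !inE; apply/andP/familyP.
    case=> /eqP ha /eqP hb i; rewrite /Fam; case: eqP => [->|_]; first by rewrite inE ha.
    by case: eqP => [->|_] //; rewrite inE hb.
  move=> H; split; first by have := H a; rewrite /Fam eqxx.
  by have := H b; rewrite /Fam eq_sym (negbTE ab) eqxx.
rewrite card_family foldrE big_image /=.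
apply: eq_bigr => i _; rewrite /Fam; case: eqP => _ /=; first by rewrite card1.
by case: eqP => _ /=; rewrite ?card1 ?cardT ?size_enum.
Qed.

Lemma marg (F : J -> J -> R) :
  (\sum_(S : {ffun T -> J}) F (S a) (S b)) * (#|J| ^ 2)%:R =
  (#|J| ^ #|T|)%:R * \sum_(x : J) \sum_(y : J) F x y.
Proof.
pose K := \prod_(i : T) (if (i == a) || (i == b) then 1 else #|J|)%N.
have H : forall G : J -> J -> R,
  \sum_(S : {ffun T -> J}) G (S a) (S b) = K%:R * \sum_(x : J) \sum_(y : J) G x y.
  move=> G.
  rewrite (eq_bigr (fun S : {ffun T -> J} => \sum_(x : J) \sum_(y : J)
       (if (S a == x) && (S b == y) then G x y else 0))); last first.
    move=> S _; rewrite (bigD1 (S a)) //= [X in _ + X]big1 ?addr0; last first.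
      move=> x hx; apply: big1 => y _.
      by rewrite eq_sym (negbTE hx).
    rewrite (bigD1 (S b)) //= [X in _ + X]big1 ?addr0 ?eqxx // => y hy.
    by rewrite eq_sym (negbTE hy) andbF.
  rewrite exchange_big mulr_sumr; apply: eq_bigr => x _.
  rewrite exchange_big mulr_sumr; apply: eq_bigr => y _.
  rewrite -big_mkcond /= sumr_const card_fam mulr_natl.
  done.
have H1 := H (fun _ _ => 1).
rewrite H.
have -> : (#|J| ^ #|T|)%:R = K%:R * (#|J| ^ 2)%:R :> R.
  move: H1; rewrite !sumr_const card_ffun => ->.
  by rewrite -mulrnA -[(#|J| * #|J|)%N]/(#|J| ^ 2)%N.
by rewrite mulrAC.
Qed.
End Marg.

Lemma telesc (R : realFieldType) n l (S : {ffun 'I_n.+1 -> 'I_l.+1}) c :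
  (1 <= cs c)%N -> (cs c <= ct c)%N -> (ct c <= n)%N ->
  price_of (line_random_price R S) c =
  ((S (inord (ct c)) : nat)%:R - (S (inord (cs c).-1) : nat)%:R).
Proof.
move=> h1 h2 h3.
pose u k : R := ((S (inord k)) : nat)%:R.
rewrite /price_of /line_random_price.
rewrite -(big_mkord (fun i => cs c <= i.+1 <= ct c)%N (fun k => u k.+1 - u k)).
rewrite (big_cat_nat _ (n := (cs c).-1)) //=; last lia.
rewrite (big_cat_nat _ (n := ct c) (m := (cs c).-1)) //=; last lia.
rewrite big_nat_cond big1 ?add0r; last first.
  move=> i /andP [/andP [_ hi] hP]; lia.
rewrite [X in _ + X]big_nat_cond [X in _ + X]big1 ?addr0; last first.
  move=> i /andP [/andP [hi _] hP]; lia.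
rewrite (@congr_big_nat _ _ _ (cs c).-1 (ct c) (cs c).-1 (ct c) _ (fun _ => true) _ (fun k => u k.+1 - u k)) //; last first.
  move=> i hi; apply/andP; split; lia.
rewrite telescope_sumr; last lia.
by rewrite /u.
Qed.

Lemma term (R : realFieldType) (x y w : nat) :
  (if (y%:R - x%:R <= w%:R :> R) then Num.max (y%:R - x%:R : R) 0 else 0) =
  (if (x < y)%N && (y <= x + w)%N then y - x else 0)%N%:R.
Proof.
case: (ltnP x y) => hxy /=.
  rewrite -natrB; last exact: ltnW.
  rewrite ler_nat leq_subLR addnC.
  case: ifP => // _.
  by rewrite max_l // ler0n.
have hle : y%:R - x%:R <= 0 :> R by rewrite subr_le0 ler_nat.
rewrite (le_trans hle) ?ler0n //.
by rewrite max_r.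
Qed.

Section Aux.
Variable R : realFieldType.

Lemma eq_sum_all (T : Type) (P : pred T) (r : seq T) (F G : T -> R) :
  all P r -> (forall c, P c -> F c = G c) -> \sum_(c <- r) F c = \sum_(c <- r) G c.
Proof.
move=> hA hFG; elim: r hA => [|c r IH] /=; first by rewrite !big_nil.
by case/andP => hc hr; rewrite !big_cons hFG // IH.
Qed.

Lemma ler_sum_all (T : Type) (P : pred T) (r : seq T) (F G : T -> R) :
  all P r -> (forall c, P c -> F c <= G c) -> \sum_(c <- r) F c <= \sum_(c <- r) G c.
Proof.
move=> hA hFG; elim: r hA => [|c r IH] /=; first by rewrite !big_nil.
by case/andP => hc hr; rewrite !big_cons lerD // ?hFG // IH.
Qed.
End Aux.
Arguments eq_sum_all {R T P r F G}.
Arguments ler_sum_all {R T P r F G}.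

Lemma has_sum (E : seq customer) l : has (fun c => cw c == l) E -> (l <= \sum_(c <- E) cw c)%N.
Proof.
elim: E => [|c E IH] //=; rewrite big_cons; case/orP => [/eqP ->|/IH h].
  exact: leq_addr.
exact: leq_trans h (leq_addl _ _).
Qed.

Local Open Scope ring_scope.

Theorem theorem1 (R : realFieldType) (n : nat) (E : seq customer) (s l : nat) :
  valid_instance n E ->
  (* [s,l]-valuation: s = min_j w_j, l = max_j w_j, with s >= 1 *)
  all (fun c => (s <= cw c <= l)%N) E ->
  has (fun c => cw c == s) E ->
  has (fun c => cw c == l) E ->
  (1 <= s)%N ->
  let r : R := s%:R / l%:R in
  forall p : 'I_n -> R,
    profit_coup E p / expected_profit_line_random R n l E
      <= (if r <= 1/2 then 3 / r else 6).
Proof.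
move=> hv hW hs hl s1 r p.
rewrite /valid_instance in hv.
have hsl : (s <= l)%N.
  elim: E hW hl {hv hs} => [|c E IH] //= /andP [/andP [h1 h2] h3] /orP [/eqP <-|h] //.
  exact: IH.
have l1 : (1 <= l)%N by lia.
have lpos : 0 < l%:R :> R by rewrite ltr0n.
have spos : 0 < s%:R :> R by rewrite ltr0n.
have rpos : 0 < r by rewrite /r divr_gt0.
set B := (if r <= 1/2 then 3 / r else 6).
have Bpos : 0 < B by rewrite /B; case: ifP => _; rewrite ?divr_gt0.
pose D : R := (l.+1 ^ 2)%:R.
have Dpos : 0 < D by rewrite /D ltr0n expn_gt0.
pose N : R := (l.+1 ^ n.+1)%:R.
have Npos : 0 < N by rewrite /N ltr0n expn_gt0.
set Ex := expected_profit_line_random R n l E.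
have HEx : Ex = \sum_(c <- E) (Gs l.+1 (cw c))%:R / D.
  rewrite /Ex /expected_profit_line_random -/N.
  have HS : forall S : {ffun 'I_n.+1 -> 'I_l.+1}, profit_coup E (line_random_price R S) =
     \sum_(c <- E) (hw (cw c) (S (inord (cs c).-1)) (S (inord (ct c))))%:R.
    move=> S; rewrite /profit_coup big_mkcond /=.
    apply: (eq_sum_all hv) => c /andP [/andP [h1 h2] h3].
    rewrite telesc //; exact: term.
  rewrite (eq_bigr _ (fun S _ => HS S)) exchange_big mulr_suml.
  apply: (eq_sum_all hv) => c /andP [/andP [h1 h2] h3].
  have ab : (inord (cs c).-1 : 'I_n.+1) != inord (ct c).
    apply/eqP => /(congr1 val); rewrite /= !inordK; lia.
  have M := @marg R _ _ _ _ ab (fun x y : 'I_l.+1 => (hw (cw c) x y)%:R).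
  rewrite !card_ord -/D -/N in M.
  have HG : \sum_(x < l.+1) \sum_(y < l.+1) (hw (cw c) x y)%:R = (Gs l.+1 (cw c))%:R :> R.
    by rewrite /Gs natr_sum; apply: eq_bigr => x _; rewrite natr_sum.
  rewrite HG in M.
  set X := \sum_(S : {ffun 'I_n.+1 -> 'I_l.+1}) _ in M *.
  apply/eqP; rewrite eqr_div ?lt0r_neq0 //; apply/eqP; rewrite M mulrC //.
have Hr : (r <= 1/2) = (2 * s <= l)%N.
  rewrite /r ler_pdivrMr // mul1r [_^-1 * _]mulrC ler_pdivlMr ?ltr0n //.
  by rewrite -natrM ler_nat mulnC.
have key : forall c, (s <= cw c <= l)%N -> (cw c)%:R <= B * ((Gs l.+1 (cw c))%:R / D).
  move=> c /andP [h1 h2].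
  rewrite /B Hr; case: leqP => h.
    have H := @boundA s (cw c) l h1 h2 h.
    have H' : 2 * s%:R * (cw c)%:R * D <= l%:R * (6 * (Gs l.+1 (cw c))%:R) :> R.
      by rewrite /D -[6]/(6%:R) -[2]/(2%:R) -!natrM ler_nat.
    have -> : 3 / r * ((Gs l.+1 (cw c))%:R / D) = (3 * l%:R * (Gs l.+1 (cw c))%:R) / (s%:R * D).
      rewrite /r; field.
      by apply/and3P; split; apply: lt0r_neq0; lra.
    rewrite ler_pdivlMr ?mulr_gt0 //.
    lra.
  have H := @boundB s (cw c) l h1 h2 h.
  have H' : (cw c)%:R * D <= 6 * (Gs l.+1 (cw c))%:R :> R.
    by rewrite /D -[6]/(6%:R) -!natrM ler_nat.
  rewrite mulrA ler_pdivlMr //.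
have HW : profit_coup E p <= \sum_(c <- E) (cw c)%:R.
  rewrite /profit_coup big_mkcond /=; apply: ler_sum => c _.
  case: ifP => h; last exact: ler0n.
  by rewrite ge_max h ler0n.
have HB : \sum_(c <- E) (cw c)%:R <= B * Ex.
  rewrite HEx mulr_sumr; exact: (ler_sum_all hW).
have W1 : 1 <= \sum_(c <- E) (cw c)%:R :> R.
  rewrite -natr_sum ler1n; have := @has_sum E l hl; lia.
have Expos : 0 < Ex.
  have : 0 < B * Ex by apply: lt_le_trans HB; exact: lt_le_trans ltr01 W1.
  by rewrite pmulr_rgt0.
rewrite ler_pdivrMr //; exact: (le_trans HW HB).
Qed.
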